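(* Let $(\Omega,+)$ be a group and $a,b$ central subgroups. Then $\mathit{Gras}_{ab}:=\mathit{Gras}(\Omega)\cap U_{ab}$ is a subtorsor of $U_{ab}$, and (for a base point $y\in\mathit{Gras}_{ab}$) the group $(\mathit{Gras}_{ab},y)$ acts from the left, by $(x,z)\mapsto\Gamma(x,a,y,b,z)$ and $(x,(z,\zeta))\mapsto(\Gamma(x,a,y,b,z),L_{xayb}(\zeta))$, and from the right, by $(z,x)\mapsto\Gamma(z,a,y,b,x)$ and $((z,\zeta),x)\mapsto(\Gamma(z,a,y,b,x),R_{aybx}(\zeta))$, on the Grassmannian $\mathit{Gras}(\Omega)$ and on the Grassmann tautological bundle $\widehat{\mathit{Gras}}(\Omega)=\{(z,\zeta): z\in\mathit{Gras}(\Omega),\ \zeta\in z\}$.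
   Context: $(\Omega,+)$ is a group written additively but not necessarily abelian; $\mathit{Gras}(\Omega)$ is its set of subgroups. For subsets $u,v$, $u\top v$ means every $\omega$ has a unique decomposition $\omega=\mu+\nu$ with $\mu\in u,\nu\in v$; then $P^u_v(\omega):=\nu$ and $\check P^v_u(\omega):=\mu$. $\Gamma(x,a,y,b,z)=\{\omega:\exists\alpha\in a,\beta\in b:\ \alpha+\omega+\beta\in y,\ \alpha+\omega\in z,\ \omega+\beta\in x\}$. $U_{ab}=\{x\subseteq\Omega: a\top x,\ x\top b\}$ with torsor law $\Gamma(\cdot,a,\cdot,b,\cdot)$; with base point $y$ it is a group with product $xz=\Gamma(x,a,y,b,z)$. $L_{xayb}:=-\check P^x_a\circ\check P^b_y+\mathrm{id}$, $R_{aybx}:=\mathrm{id}-P^x_b\circ P^{-a}_y$ (pointwise operations of maps $\Omega\to\Omega$). *)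

(* Defs.v *)
(* A (not necessarily abelian, possibly infinite) group written
   additively, given as a record of operations and axioms on a carrier type. *)
From Stdlib Require Import ClassicalEpsilon.

Set Implicit Arguments.

Record addGroup (T : Type) := AddGroup {
  gadd : T -> T -> T;
  gzero : T;
  gopp : T -> T;
  gaddA : forall x y z, gadd x (gadd y z) = gadd (gadd x y) z;
  gadd0l : forall x, gadd gzero x = x;
  gadd0r : forall x, gadd x gzero = x;
  gaddNl : forall x, gadd (gopp x) x = gzero;
  gaddNr : forall x, gadd x (gopp x) = gzero
}.

Section Defs.
Variables (T : Type) (G : addGroup T).

Local Notation "x + y" := (gadd G x y).
Local Notation "- x" := (gopp G x).

Definition subset := T -> Prop.

(* membership in Gras(Omega) *)
Definition is_subgroup (u : subset) : Prop :=
  u (gzero G) /\ (forall x y, u x -> u y -> u (x + y)) /\ (forall x, u x -> u (- x)).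

Definition central_subgroup (u : subset) : Prop :=
  is_subgroup u /\ forall alpha w, u alpha -> alpha + w = w + alpha.

Definition transversal (u v : subset) : Prop :=
  forall w, exists! p : T * T, u (fst p) /\ v (snd p) /\ w = fst p + snd p.

(* the (chosen) decomposition; it is the unique one whenever u ⊤ v *)
Definition decomp (u v : subset) (w : T) : T * T :=
  epsilon (inhabits (gzero G, gzero G))
    (fun p : T * T => u (fst p) /\ v (snd p) /\ w = fst p + snd p).

Definition Proj (u v : subset) (w : T) : T := snd (decomp u v w).
Definition ProjC (v u : subset) (w : T) : T := fst (decomp u v w).

Definition negset (u : subset) : subset := fun w => u (- w).

Definition Gamma (x a y b z : subset) : subset := fun w =>
  exists alpha beta, a alpha /\ b beta /\
    y (alpha + w + beta) /\ z (alpha + w) /\ x (w + beta).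

Definition U (a b : subset) : subset -> Prop :=
  fun x => transversal a x /\ transversal x b.

Definition Gras_ab (a b : subset) : subset -> Prop :=
  fun x => is_subgroup x /\ U a b x.

Definition Lop (x a y b : subset) (zeta : T) : T :=
  - (ProjC x a (ProjC b y zeta)) + zeta.

Definition Rop (a y b x : subset) (zeta : T) : T :=
  zeta + - (Proj x b (Proj (negset a) y zeta)).

End Defs.

(* Main.v *)
From Stdlib Require Import ClassicalEpsilon.
Require Import Defs.
From Stdlib Require Import ClassicalEpsilon FunctionalExtensionality PropExtensionality.
Set Implicit Arguments.

Lemma g_canc1 T (G : addGroup T) x r : gadd G x (gadd G (gopp G x) r) = r.
Proof. rewrite gaddA, gaddNr, gadd0l. reflexivity. Qed.
Lemma g_canc2 T (G : addGroup T) x r : gadd G (gopp G x) (gadd G x r) = r.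
Proof. rewrite gaddA, gaddNl, gadd0l. reflexivity. Qed.

Lemma g_opp_add T (G : addGroup T) x y :
  gopp G (gadd G x y) = gadd G (gopp G y) (gopp G x).
Proof.
  assert (H: gadd G (gadd G x y) (gadd G (gopp G y) (gopp G x)) = gzero G).
  { rewrite <- gaddA, g_canc1, gaddNr. reflexivity. }
  rewrite <- (g_canc2 G (gadd G x y) (gadd G (gopp G y) (gopp G x))), H, gadd0r.
  reflexivity.
Qed.

Lemma g_opp_opp T (G : addGroup T) x : gopp G (gopp G x) = x.
Proof.
  rewrite <- (gadd0r G (gopp G (gopp G x))), <- (gaddNl G x), gaddA, gaddNl, gadd0l.
  reflexivity.
Qed.

Lemma g_opp0 T (G : addGroup T) : gopp G (gzero G) = gzero G.
Proof. rewrite <- (gadd0l G (gopp G (gzero G))), gaddNr. reflexivity. Qed.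


Lemma g_pushR T (G : addGroup T) c (hc : forall w, gadd G c w = gadd G w c) x r :
  gadd G c (gadd G x r) = gadd G x (gadd G c r).
Proof. rewrite gaddA, hc, <- gaddA. reflexivity. Qed.

Ltac gnorm G :=
  repeat first [ rewrite <- (gaddA G) | rewrite (g_opp_add G) | rewrite (g_opp_opp G)
               | rewrite (g_opp0 G) | rewrite (gadd0l G) | rewrite (gadd0r G)
               | rewrite (g_canc1 G) | rewrite (g_canc2 G) | rewrite (gaddNr G)
               | rewrite (gaddNl G) ].

Ltac push G hc := repeat first [rewrite (g_canc1 G) | rewrite (g_canc2 G) | rewrite (g_pushR G _ hc)]; rewrite ?hc; gnorm G.

Lemma memeq T (u : subset T) e e' : u e' -> e = e' -> u e.
Proof. intros H ->; exact H. Qed.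


Lemma cen T (G : addGroup T) u c : central_subgroup G u -> u c ->
  forall w, gadd G c w = gadd G w c.
Proof. intros [_ H] Hc w. apply H, Hc. Qed.

Lemma cenN T (G : addGroup T) u c : central_subgroup G u -> u c ->
  forall w, gadd G (gopp G c) w = gadd G w (gopp G c).
Proof. intros [[_ [_ Hn]] H] Hc w. apply H, Hn, Hc. Qed.

Ltac geq G :=
  gnorm G;
  repeat match goal with
  | Hc : ?u ?c, Hu : central_subgroup G ?u |- _ =>
      push G (@cen _ G _ _ Hu Hc); push G (@cenN _ G _ _ Hu Hc); clear Hc
  end; reflexivity.

Ltac mem G H := eapply memeq; [exact H | geq G].

Lemma Gamma_intro T (G : addGroup T) x a y b z w al be :
  a al -> b be -> y (gadd G (gadd G al w) be) -> z (gadd G al w) -> x (gadd G w be) ->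
  Gamma G x a y b z w.
Proof. intros; exists al, be; auto. Qed.

Lemma Gamma_sub T (G : addGroup T) a b x y z :
  central_subgroup G a -> central_subgroup G b ->
  is_subgroup G x -> is_subgroup G y -> is_subgroup G z ->
  is_subgroup G (Gamma G x a y b z).
Proof.
  intros HA HB [x0 [xa xn]] [y0 [ya yn]] [z0 [za zn]].
  pose proof HA as [[a0 [aa an]] _]. pose proof HB as [[b0 [ba bn]] _].
  split; [|split].
  - apply Gamma_intro with (al := gzero G) (be := gzero G); auto.
  - intros w1 w2 [al1 [be1 [Ha1 [Hb1 [H1 [H2 H3]]]]]] [al2 [be2 [Ha2 [Hb2 [K1 [K2 K3]]]]]].
    apply Gamma_intro with (al := gadd G al1 al2) (be := gadd G be1 be2); auto.
    + pose proof (ya _ _ H1 K1). mem G H.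
    + pose proof (za _ _ H2 K2). mem G H.
    + pose proof (xa _ _ H3 K3). mem G H.
  - intros w [al [be [Ha [Hb [H1 [H2 H3]]]]]].
    apply Gamma_intro with (al := gopp G al) (be := gopp G be); auto.
    + pose proof (yn _ H1). mem G H.
    + pose proof (zn _ H2). mem G H.
    + pose proof (xn _ H3). mem G H.
Qed.

Lemma set_ext T (u v : subset T) : (forall w, u w <-> v w) -> u = v.
Proof.
  intros H. apply functional_extensionality; intro w.
  apply propositional_extensionality; apply H.
Qed.

Lemma Gamma_assocL T (G : addGroup T) a b x x' y z :
  central_subgroup G a -> central_subgroup G b ->
  Gamma G x a y b (Gamma G x' a y b z) = Gamma G (Gamma G x a y b x') a y b z.
Proof.
  intros HA HB.
  pose proof HA as [[a0 [aa an]] _]. pose proof HB as [[b0 [ba bn]] _].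
  apply set_ext; intro w; split.
  - intros [al [be [Ha [Hb [H1 [[al' [be' [Ha' [Hb' [H4 [H5 H6]]]]]] H3]]]]]].
    apply Gamma_intro with (al := gadd G al' al) (be := be'); auto.
    + mem G H4.
    + mem G H5.
    + apply Gamma_intro with (al := al) (be := gadd G (gopp G be') be); auto.
      * mem G H1.
      * mem G H6.
      * mem G H3.
  - intros [al2 [be2 [Ha2 [Hb2 [H1 [H2 [al3 [be3 [Ha3 [Hb3 [K1 [K2 K3]]]]]]]]]]]].
    apply Gamma_intro with (al := al3) (be := gadd G be2 be3); auto.
    + mem G K1.
    + apply Gamma_intro with (al := gadd G al2 (gopp G al3)) (be := be2); auto.
      * mem G H1.
      * mem G H2.
      * mem G K2.
    + mem G K3.
Qed.

Lemma Gamma_assocR T (G : addGroup T) a b x x' y z :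
  central_subgroup G a -> central_subgroup G b ->
  Gamma G (Gamma G z a y b x) a y b x' = Gamma G z a y b (Gamma G x a y b x').
Proof.
  intros HA HB.
  pose proof HA as [[a0 [aa an]] _]. pose proof HB as [[b0 [ba bn]] _].
  apply set_ext; intro w; split.
  - intros [al [be [Ha [Hb [H1 [H2 [al1 [be1 [Ha1 [Hb1 [K1 [K2 K3]]]]]]]]]]]].
    apply Gamma_intro with (al := al1) (be := gadd G be be1); auto.
    + mem G K1.
    + apply Gamma_intro with (al := gadd G al (gopp G al1)) (be := be); auto.
      * mem G H1.
      * mem G H2.
      * mem G K2.
    + mem G K3.
  - intros [al2 [be2 [Ha2 [Hb2 [H1 [[al3 [be3 [Ha3 [Hb3 [K1 [K2 K3]]]]]] H3]]]]]].
    apply Gamma_intro with (al := gadd G al3 al2) (be := be3); auto.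
    + mem G K1.
    + mem G K2.
    + apply Gamma_intro with (al := al2) (be := gadd G (gopp G be3) be2); auto.
      * mem G H1.
      * mem G K3.
      * mem G H3.
Qed.

Lemma trans_uniq T (G : addGroup T) u v m1 n1 m2 n2 :
  transversal G u v -> u m1 -> v n1 -> u m2 -> v n2 ->
  gadd G m1 n1 = gadd G m2 n2 -> m1 = m2 /\ n1 = n2.
Proof.
  intros H H1 H2 H3 H4 E.
  destruct (H (gadd G m1 n1)) as [p [_ Hu]].
  assert (A := Hu (m1, n1) (conj H1 (conj H2 eq_refl))).
  assert (B := Hu (m2, n2) (conj H3 (conj H4 E))).
  rewrite A in B. inversion B. auto.
Qed.

Lemma trans_ex T (G : addGroup T) u v w :
  transversal G u v -> exists m n, u m /\ v n /\ w = gadd G m n.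
Proof.
  intros H. destruct (H w) as [[m n] [[H1 [H2 H3]] _]]. exists m, n. auto.
Qed.

Lemma decomp_spec T (G : addGroup T) u v w :
  transversal G u v ->
  u (fst (decomp G u v w)) /\ v (snd (decomp G u v w)) /\
  w = gadd G (fst (decomp G u v w)) (snd (decomp G u v w)).
Proof.
  intros H. unfold decomp. apply epsilon_spec.
  destruct (H w) as [p [Hp _]]. exists p. exact Hp.
Qed.

Lemma trans_zero T (G : addGroup T) u v t :
  is_subgroup G u -> is_subgroup G v -> transversal G u v -> u t -> v t -> t = gzero G.
Proof.
  intros [u0 _] [v0 _] H Hu Hv.
  destruct (@trans_uniq _ G u v t (gzero G) (gzero G) t H Hu v0 u0 Hv) as [E _].
  - rewrite gadd0l, gadd0r. reflexivity.
  - exact E.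
Qed.

Lemma trans_intro T (G : addGroup T) u v :
  is_subgroup G u -> is_subgroup G v ->
  (forall t, u t -> v t -> t = gzero G) ->
  (forall w, exists m n, u m /\ v n /\ w = gadd G m n) ->
  transversal G u v.
Proof.
  intros [u0 [ua un]] [v0 [va vn]] Hz Hs w.
  destruct (Hs w) as [m [n [H1 [H2 H3]]]].
  exists (m, n). split; [auto|].
  intros [m' n'] [K1 [K2 K3]]; simpl in *.
  assert (E : gadd G (gopp G m) m' = gadd G n (gopp G n')).
  { rewrite H3 in K3.
    transitivity (gadd G (gopp G m) (gadd G (gadd G m n) (gopp G n'))).
    - rewrite K3, <- (gaddA G m'), gaddNr, gadd0r. reflexivity.
    - rewrite <- (gaddA G m), g_canc2. reflexivity. }
  assert (Z : gadd G (gopp G m) m' = gzero G).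
  { apply Hz; auto. rewrite E; auto. }
  assert (m' = m).
  { rewrite <- (g_canc1 G m m'), Z, gadd0r. reflexivity. }
  subst m'. rewrite Z in E.
  assert (n' = n).
  { rewrite <- (gadd0l G n'), E, <- gaddA, gaddNl, gadd0r. reflexivity. }
  subst n'. reflexivity.
Qed.

Lemma Gamma_idL T (G : addGroup T) a b y z :
  central_subgroup G a -> central_subgroup G b ->
  is_subgroup G y -> transversal G a y -> transversal G y b ->
  Gamma G y a y b z = z.
Proof.
  intros HA HB Hy Tay Tyb.
  pose proof HA as [[a0 [aa an]] _]. pose proof HB as [[b0 [ba bn]] _].
  pose proof Hy as [y0 [ya yn]].
  apply set_ext; intro w; split.
  - intros [al [be [Ha [Hb [H1 [H2 H3]]]]]].
    assert (Hal : y al).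
    { pose proof (ya _ _ H1 (yn _ H3)). mem G H. }
    assert (al = gzero G) by (eapply trans_zero; [apply HA | exact Hy | exact Tay | auto | auto]).
    subst al. rewrite gadd0l in H2. exact H2.
  - intros Hz.
    destruct (trans_ex w Tyb) as [m [n [Hm [Hn E]]]].
    apply Gamma_intro with (al := gzero G) (be := gopp G n); auto.
    + subst w. mem G Hm.
    + rewrite gadd0l; auto.
    + subst w. mem G Hm.
Qed.

Lemma Gamma_idR T (G : addGroup T) a b y z :
  central_subgroup G a -> central_subgroup G b ->
  is_subgroup G y -> transversal G a y -> transversal G y b ->
  Gamma G z a y b y = z.
Proof.
  intros HA HB Hy Tay Tyb.
  pose proof HA as [[a0 [aa an]] _]. pose proof HB as [[b0 [ba bn]] _].
  pose proof Hy as [y0 [ya yn]].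
  apply set_ext; intro w; split.
  - intros [al [be [Ha [Hb [H1 [H2 H3]]]]]].
    assert (Hbe : y be).
    { pose proof (ya _ _ (yn _ H2) H1). mem G H. }
    assert (be = gzero G) by (eapply trans_zero; [exact Hy | apply HB | exact Tyb | auto | auto]).
    subst be. rewrite gadd0r in H3. exact H3.
  - intros Hz.
    destruct (trans_ex w Tay) as [m [n [Hm [Hn E]]]].
    apply Gamma_intro with (al := gopp G m) (be := gzero G); auto.
    + subst w. mem G Hn.
    + subst w. mem G Hn.
    + rewrite gadd0r; auto.
Qed.

Lemma Gras_closed T (G : addGroup T) a b x y z :
  central_subgroup G a -> central_subgroup G b ->
  Gras_ab G a b x -> Gras_ab G a b y -> Gras_ab G a b z ->
  Gras_ab G a b (Gamma G x a y b z).
Proof.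
  intros HA HB [Hx [Tax Txb]] [Hy [Tay Tyb]] [Hz [Taz Tzb]].
  pose proof HA as [Ha_ _]. pose proof Ha_ as [a0 [aa an]]. pose proof HB as [Hb_ _]. pose proof Hb_ as [b0 [ba bn]].
  pose proof (Gamma_sub HA HB Hx Hy Hz) as HG.
  split; [exact HG | split].
  - apply trans_intro; auto.
    + intros t Ht [al [be [Ha [Hb [H1 [H2 H3]]]]]].
      assert (E1 : gadd G al t = gzero G) by (eapply trans_zero; [exact Ha_ | exact Hz | exact Taz | auto | auto]).
      rewrite E1, gadd0l in H1.
      assert (be = gzero G) by (eapply trans_zero; [exact Hy | exact Hb_ | exact Tyb | auto | auto]).
      subst be. rewrite gadd0r in H3.
      eapply trans_zero; [exact Ha_ | exact Hx | exact Tax | auto | auto].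
    + intros w.
      destruct (trans_ex w Taz) as [mu [ze [Hmu [Hze E1]]]].
      destruct (trans_ex ze Tyb) as [et [nu [Het [Hnu E2]]]].
      destruct (trans_ex (gadd G w (gopp G nu)) Tax) as [al' [xi [Hal' [Hxi E3]]]].
      exists al', (gadd G (gopp G al') w). split; [exact Hal'|split].
      * apply Gamma_intro with (al := gadd G (gopp G mu) al') (be := gopp G nu); auto.
        -- subst w ze. mem G Het.
        -- subst w ze. mem G Hze.
        -- assert (Ex : xi = gadd G (gopp G al') (gadd G w (gopp G nu)))
             by (rewrite E3, g_canc2; reflexivity).
           rewrite Ex in Hxi. subst w ze. mem G Hxi.
      * rewrite g_canc1. reflexivity.
  - apply trans_intro; auto.
    + intros t [al [be [Ha [Hb [H1 [H2 H3]]]]]] Ht.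
      assert (E1 : gadd G t be = gzero G) by (eapply trans_zero; [exact Hx | exact Hb_ | exact Txb | auto | auto]).
      assert (H1' : y al).
      { eapply memeq; [exact H1|]. rewrite <- (gaddA G al), E1, gadd0r. reflexivity. }
      assert (al = gzero G) by (eapply trans_zero; [exact Ha_ | exact Hy | exact Tay | auto | auto]).
      subst al. rewrite gadd0l in H2.
      eapply trans_zero; [exact Hz | exact Hb_ | exact Tzb | auto | auto].
    + intros w.
      destruct (trans_ex w Txb) as [xi [nu [Hxi [Hnu E1]]]].
      destruct (trans_ex (gadd G w (gopp G nu)) Tay) as [mu [et [Hmu [Het E2]]]].
      destruct (trans_ex (gadd G (gopp G mu) w) Tzb) as [ze [nu' [Hze [Hnu' E3]]]].
      exists (gadd G w (gopp G nu')), nu'. split; [|split; [exact Hnu'|]].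
      * apply Gamma_intro with (al := gopp G mu) (be := gadd G (gopp G nu) nu'); auto.
        -- assert (Ee : et = gadd G (gopp G mu) (gadd G w (gopp G nu)))
             by (rewrite E2, g_canc2; reflexivity).
           rewrite Ee in Het. mem G Het.
        -- assert (Ez : ze = gadd G (gadd G (gopp G mu) w) (gopp G nu'))
             by (rewrite E3, <- gaddA, gaddNr, gadd0r; reflexivity).
           rewrite Ez in Hze. mem G Hze.
        -- subst w. mem G Hxi.
      * rewrite <- gaddA, gaddNl, gadd0r. reflexivity.
Qed.

Definition Lrel T (G : addGroup T) (a b y x : subset T) (ze t : T) : Prop :=
  exists al be, a al /\ b be /\ x (gadd G t be) /\ y (gadd G (gadd G al t) be) /\
    gadd G al t = ze.

Definition Rrel T (G : addGroup T) (a b y x : subset T) (ze t : T) : Prop :=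
  exists al be, a al /\ b be /\ x (gadd G al t) /\ y (gadd G (gadd G al t) be) /\
    gadd G t be = ze.

Lemma Lop_spec T (G : addGroup T) a b x y ze :
  central_subgroup G a -> central_subgroup G b ->
  transversal G a x -> transversal G y b ->
  Lrel G a b y x ze (Lop G x a y b ze).
Proof.
  intros HA HB Tax Tyb.
  pose proof HA as [[a0 [aa an]] _]. pose proof HB as [[b0 [ba bn]] _].
  unfold Lop, ProjC.
  pose proof (decomp_spec ze Tyb) as [H1 [H2 E1]].
  set (mu := fst (decomp G y b ze)) in *. set (nu := snd (decomp G y b ze)) in *.
  clearbody mu nu.
  pose proof (decomp_spec mu Tax) as [K1 [K2 E2]].
  set (al := fst (decomp G a x mu)) in *. set (xi := snd (decomp G a x mu)) in *.
  clearbody al xi. subst ze mu.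
  exists al, (gopp G nu). repeat split; auto.
  - mem G K2.
  - mem G H1.
  - geq G.
Qed.

Lemma Lrel_uniq T (G : addGroup T) a b x y ze t1 t2 :
  central_subgroup G a -> central_subgroup G b ->
  is_subgroup G x -> is_subgroup G y ->
  transversal G a x -> transversal G y b ->
  Lrel G a b y x ze t1 -> Lrel G a b y x ze t2 -> t1 = t2.
Proof.
  intros HA HB Hx Hy Tax Tyb [al1 [be1 [Ha1 [Hb1 [H1 [H2 E1]]]]]] [al2 [be2 [Ha2 [Hb2 [K1 [K2 E2]]]]]].
  pose proof HA as [[a0 [aa an]] _]. pose proof HB as [[b0 [ba bn]] _].
  subst ze.
  assert (t2 = gadd G (gopp G al2) (gadd G al1 t1)) by (rewrite <- E2, g_canc2; reflexivity).
  subst t2. clear E2.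
  destruct (@trans_uniq _ G y b _ (gopp G be1) _ (gopp G be2) Tyb H2 (bn _ Hb1) K2 (bn _ Hb2))
    as [_ Eb].
  { geq G. }
  assert (be1 = be2) by (rewrite <- (g_opp_opp G be1), Eb, g_opp_opp; reflexivity).
  subst be2.
  destruct (@trans_uniq _ G a x al1 _ al2 _ Tax Ha1 H1 Ha2 K1) as [Ea _].
  { geq G. }
  subst al2. rewrite g_canc2. reflexivity.
Qed.

Lemma Lrel_mem T (G : addGroup T) a b x y z ze t :
  Lrel G a b y x ze t -> z ze -> Gamma G x a y b z t.
Proof.
  intros [al [be [Ha [Hb [H1 [H2 E]]]]]] Hz. subst ze.
  exists al, be. auto.
Qed.

Lemma Lrel_comp T (G : addGroup T) a b x x' y ze s t :
  central_subgroup G a -> central_subgroup G b ->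
  Lrel G a b y x' ze s -> Lrel G a b y x s t -> Lrel G a b y (Gamma G x a y b x') ze t.
Proof.
  intros HA HB [al1 [be1 [Ha1 [Hb1 [H1 [H2 E1]]]]]] [al2 [be2 [Ha2 [Hb2 [K1 [K2 E2]]]]]].
  pose proof HA as [[a0 [aa an]] _]. pose proof HB as [[b0 [ba bn]] _].
  subst ze s.
  exists (gadd G al1 al2), be1. repeat split; auto.
  - apply Gamma_intro with (al := al2) (be := gadd G (gopp G be1) be2); auto.
    + mem G K2.
    + mem G H1.
    + mem G K1.
  - mem G H2.
  - geq G.
Qed.

Lemma negset_eq T (G : addGroup T) a : is_subgroup G a -> negset G a = a.
Proof.
  intros [_ [_ an]]. apply set_ext; intro w; unfold negset; split; intro H.
  - rewrite <- (g_opp_opp G w). auto.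
  - auto.
Qed.

Lemma Rop_spec T (G : addGroup T) a b x y ze :
  central_subgroup G a -> central_subgroup G b ->
  transversal G a y -> transversal G x b ->
  Rrel G a b y x ze (Rop G a y b x ze).
Proof.
  intros HA HB Tay Txb.
  pose proof HA as [Ha_ _]. pose proof Ha_ as [a0 [aa an]].
  pose proof HB as [[b0 [ba bn]] _].
  unfold Rop, Proj. rewrite (negset_eq Ha_).
  pose proof (decomp_spec ze Tay) as [H1 [H2 E1]].
  set (al := fst (decomp G a y ze)) in *. set (et := snd (decomp G a y ze)) in *.
  clearbody al et.
  pose proof (decomp_spec et Txb) as [K1 [K2 E2]].
  set (xi := fst (decomp G x b et)) in *. set (nu := snd (decomp G x b et)) in *.
  clearbody xi nu. subst ze et.
  pose proof (an _ H1) as H1'.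
  exists (gopp G al), nu. repeat split; auto.
  - mem G K1.
  - mem G H2.
  - geq G.
Qed.

Lemma Rrel_uniq T (G : addGroup T) a b x y ze t1 t2 :
  central_subgroup G a -> central_subgroup G b ->
  is_subgroup G x -> is_subgroup G y ->
  transversal G a y -> transversal G x b ->
  Rrel G a b y x ze t1 -> Rrel G a b y x ze t2 -> t1 = t2.
Proof.
  intros HA HB Hx Hy Tay Txb [al1 [be1 [Ha1 [Hb1 [H1 [H2 E1]]]]]] [al2 [be2 [Ha2 [Hb2 [K1 [K2 E2]]]]]].
  pose proof HA as [[a0 [aa an]] _]. pose proof HB as [[b0 [ba bn]] _].
  subst ze.
  assert (t2 = gadd G (gadd G t1 be1) (gopp G be2))
    by (rewrite <- E2, <- gaddA, gaddNr, gadd0r; reflexivity).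
  subst t2. clear E2.
  destruct (@trans_uniq _ G a y (gopp G al1) _ (gopp G al2) _ Tay (an _ Ha1) H2 (an _ Ha2) K2)
    as [Ea _].
  { geq G. }
  assert (al1 = al2) by (rewrite <- (g_opp_opp G al1), Ea, g_opp_opp; reflexivity).
  subst al2.
  destruct (@trans_uniq _ G x b _ be1 _ be2 Txb H1 Hb1 K1 Hb2) as [_ Eb].
  { geq G. }
  subst be2. geq G.
Qed.

Lemma Rrel_mem T (G : addGroup T) a b x y z ze t :
  Rrel G a b y x ze t -> z ze -> Gamma G z a y b x t.
Proof.
  intros [al [be [Ha [Hb [H1 [H2 E]]]]]] Hz. subst ze.
  exists al, be. auto.
Qed.

Lemma Rrel_comp T (G : addGroup T) a b x x' y ze s t :
  central_subgroup G a -> central_subgroup G b ->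
  Rrel G a b y x ze s -> Rrel G a b y x' s t -> Rrel G a b y (Gamma G x a y b x') ze t.
Proof.
  intros HA HB [al1 [be1 [Ha1 [Hb1 [H1 [H2 E1]]]]]] [al2 [be2 [Ha2 [Hb2 [K1 [K2 E2]]]]]].
  pose proof HA as [[a0 [aa an]] _]. pose proof HB as [[b0 [ba bn]] _].
  subst ze s.
  exists al1, (gadd G be2 be1). repeat split; auto.
  - apply Gamma_intro with (al := gadd G (gopp G al1) al2) (be := be2); auto.
    + mem G K2.
    + mem G K1.
    + mem G H1.
  - mem G H2.
  - geq G.
Qed.
Theorem theorem7p6 (T : Type) (G : addGroup T) (a b : subset T) :
  central_subgroup G a -> central_subgroup G b ->
  (* Gras_ab is a subtorsor of U_ab *)
  (forall x y z, Gras_ab G a b x -> Gras_ab G a b y -> Gras_ab G a b z ->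
     Gras_ab G a b (Gamma G x a y b z)) /\
  (forall y, Gras_ab G a b y ->
    (* left action of (Gras_ab, y) on Gras(Omega) *)
    ((forall x z, Gras_ab G a b x -> is_subgroup G z ->
        is_subgroup G (Gamma G x a y b z)) /\
     (forall z, is_subgroup G z -> Gamma G y a y b z = z) /\
     (forall x x' z, Gras_ab G a b x -> Gras_ab G a b x' -> is_subgroup G z ->
        Gamma G x a y b (Gamma G x' a y b z) =
        Gamma G (Gamma G x a y b x') a y b z)) /\
    (* left action on the tautological bundle *)
    ((forall x z zeta, Gras_ab G a b x -> is_subgroup G z -> z zeta ->
        Gamma G x a y b z (Lop G x a y b zeta)) /\
     (forall z zeta, is_subgroup G z -> z zeta -> Lop G y a y b zeta = zeta) /\
     (forall x x' z zeta, Gras_ab G a b x -> Gras_ab G a b x' ->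
        is_subgroup G z -> z zeta ->
        Lop G x a y b (Lop G x' a y b zeta) =
        Lop G (Gamma G x a y b x') a y b zeta)) /\
    (* right action of (Gras_ab, y) on Gras(Omega) *)
    ((forall z x, is_subgroup G z -> Gras_ab G a b x ->
        is_subgroup G (Gamma G z a y b x)) /\
     (forall z, is_subgroup G z -> Gamma G z a y b y = z) /\
     (forall z x x', is_subgroup G z -> Gras_ab G a b x -> Gras_ab G a b x' ->
        Gamma G (Gamma G z a y b x) a y b x' =
        Gamma G z a y b (Gamma G x a y b x'))) /\
    (* right action on the tautological bundle *)
    ((forall z zeta x, is_subgroup G z -> z zeta -> Gras_ab G a b x ->
        Gamma G z a y b x (Rop G a y b x zeta)) /\
     (forall z zeta, is_subgroup G z -> z zeta -> Rop G a y b y zeta = zeta) /\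
     (forall z zeta x x', is_subgroup G z -> z zeta ->
        Gras_ab G a b x -> Gras_ab G a b x' ->
        Rop G a y b x' (Rop G a y b x zeta) =
        Rop G a y b (Gamma G x a y b x') zeta))).
Proof.
  intros HA HB. split.
  { intros x y z Gx Gy Gz. apply Gras_closed; auto. }
  intros y Gy. pose proof Gy as [Hy [Tay Tyb]].
  assert (Lsp : forall x ze, Gras_ab G a b x -> Lrel G a b y x ze (Lop G x a y b ze)).
  { intros x ze [_ [Tax _]]. apply Lop_spec; auto. }
  assert (Lun : forall x ze t1 t2, Gras_ab G a b x -> Lrel G a b y x ze t1 ->
             Lrel G a b y x ze t2 -> t1 = t2).
  { intros x ze t1 t2 [Hx [Tax _]]. apply Lrel_uniq; auto. }
  assert (Rsp : forall x ze, Gras_ab G a b x -> Rrel G a b y x ze (Rop G a y b x ze)).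
  { intros x ze [_ [_ Txb]]. apply Rop_spec; auto. }
  assert (Run : forall x ze t1 t2, Gras_ab G a b x -> Rrel G a b y x ze t1 ->
             Rrel G a b y x ze t2 -> t1 = t2).
  { intros x ze t1 t2 [Hx [_ Txb]]. apply Rrel_uniq; auto. }
  pose proof HA as [[a0 [aa an]] _]. pose proof HB as [[b0 [ba bn]] _].
  assert (Lid : forall ze, Lrel G a b y y ze ze).
  { intros ze. destruct (trans_ex ze Tyb) as [m [n [Hm [Hn E]]]].
    exists (gzero G), (gopp G n). subst ze. repeat split; auto.
    - mem G Hm.
    - mem G Hm.
    - geq G. }
  assert (Rid : forall ze, Rrel G a b y y ze ze).
  { intros ze. destruct (trans_ex ze Tay) as [m [n [Hm [Hn E]]]].
    exists (gopp G m), (gzero G). subst ze. repeat split; auto.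
    - mem G Hn.
    - mem G Hn.
    - geq G. }
  split; [|split; [|split]].
  - split; [|split].
    + intros x z [Hx _] Hz. apply Gamma_sub; auto.
    + intros z Hz. apply Gamma_idL; auto.
    + intros x x' z _ _ _. apply Gamma_assocL; auto.
  - split; [|split].
    + intros x z ze Gx Hz Hze. eapply Lrel_mem; [apply Lsp; exact Gx | exact Hze].
    + intros z ze _ _. eapply Lun; [exact Gy | apply Lsp; exact Gy | apply Lid].
    + intros x x' z ze Gx Gx' _ _.
      assert (Gx'' := Gras_closed HA HB Gx Gy Gx').
      eapply Lun; [exact Gx'' | | apply Lsp; exact Gx''].
      eapply Lrel_comp; auto.
  - split; [|split].
    + intros z x Hz [Hx _]. apply Gamma_sub; auto.
    + intros z Hz. apply Gamma_idR; auto.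
    + intros z x x' _ _ _. apply Gamma_assocR; auto.
  - split; [|split].
    + intros z ze x Hz Hze Gx. eapply Rrel_mem; [apply Rsp; exact Gx | exact Hze].
    + intros z ze _ _. eapply Run; [exact Gy | apply Rsp; exact Gy | apply Rid].
    + intros z ze x x' _ _ Gx Gx'.
      assert (Gx'' := Gras_closed HA HB Gx Gy Gx').
      eapply Run; [exact Gx'' | | apply Rsp; exact Gx''].
      eapply Rrel_comp; auto.
Qed.
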